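(* Let $\hat H$, $\tilde\tau>0$ and $\Phi$ be as in the context. If $(\alpha,\beta)$ lies in $$\mathcal{R}=\{(\alpha,\beta)\in\mathbb{R}^2:\ |\alpha|-1<\beta<1\},$$ then every root $w$ of $\Phi(w)=0$ satisfies $\operatorname{Re} w<0$, i.e. the equilibrium is locally asymptotically stable, regardless of the delay kernel and of $\tilde\tau>0$. Moreover $\mathcal{R}\subset\mathcal{S}=\{\alpha<2,\ \alpha-1<\beta<(\alpha-4)^2/4\}$.
   Context: Let $g:[0,\infty)\to[0,\infty)$ be a probability density with mean $\int_0^\infty t\,g(t)\,dt=1$ (or the Dirac measure at $1$), and let $\hat H(w)=\int_0^\infty g(s)e^{-ws}\,ds$; then $\hat H(0)=1$, $\hat H'(0)=-1$, and $|\hat H(w)|\le 1$ for $\operatorname{Re} w\ge 0$. The delay kernel with mean $\tau>0$ is $h(t)=\tau^{-1}g(t/\tau)$. For a time constant $\bar\tau>0$ put $\tilde\tau=\tau/\bar\tau$. For $\alpha,\beta\in\mathbb{R}$ the (rescaled) characteristic equation of the linearized coupled Wilson–Cowan system is $$\Phi(w):=(w+\tilde\tau)^4-\alpha\,\tilde\tau^2(w+\tilde\tau)^2\hat H(w)^2+\beta\,\tilde\tau^4\hat H(w)^4=0,$$ equivalently $Q(w)^2-\alpha Q(w)+\beta=0$ with $Q(w)=\big(\frac{w+\tilde\tau}{\tilde\tau\hat H(w)}\big)^2$. The equilibrium is locally asymptotically stable iff all roots have negative real part. $\mathcal{S}$ is the no-delay stability region. *)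

(* Defs.v *)
From HB Require Import structures.
From mathcomp Require Import all_boot all_order all_algebra.
From mathcomp Require Import all_classical all_reals all_analysis.
From mathcomp Require Import complex.
Set Implicit Arguments. Unset Strict Implicit. Unset Printing Implicit Defensive.
Import Order.TTheory GRing.Theory Num.Theory.
Local Open Scope ring_scope.
Local Open Scope classical_set_scope.
Local Open Scope complex_scope.

(* A (normalised) delay kernel g with mean 1: either a probability density
   on [0, oo) or the Dirac measure at 1. *)
Inductive delay_kernel (R : realType) :=
| Density of (R -> R)
| Dirac1.

Definition density_mean1 (R : realType) (g : R -> R) : Prop :=
  measurable_fun (`[0%R, +oo[ : set R) g /\
  (forall t : R, 0 <= t -> 0 <= g t) /\
  (\int[@lebesgue_measure R]_(t in (`[0%R, +oo[ : set R)) (g t)%:E = 1)%E /\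
  (\int[@lebesgue_measure R]_(t in (`[0%R, +oo[ : set R)) (t * g t)%:E = 1)%E.

Definition admissible (R : realType) (k : delay_kernel R) : Prop :=
  match k with
  | Density g => density_mean1 g
  | Dirac1 => True
  end.

(* Laplace transform  H^(w) = int_0^oo g(s) e^{-w s} ds, written via its
   real and imaginary parts (w = a + i b):
   e^{-ws} = e^{-as} (cos(bs) - i sin(bs)).  For the Dirac measure at 1,
   H^(w) = e^{-w}. (Meaningful for complex.Re w >= 0.) *)
Definition Hhat (R : realType) (k : delay_kernel R) (w : R[i]) : R[i] :=
  match k with
  | Density g =>
      @Complex R
        (Rintegral (@lebesgue_measure R) (`[0%R, +oo[ : set R)
           (fun s : R => g s * expR (- (complex.Re w * s)) * cos (complex.Im w * s)))
        (- Rintegral (@lebesgue_measure R) (`[0%R, +oo[ : set R)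
           (fun s : R => g s * expR (- (complex.Re w * s)) * sin (complex.Im w * s)))
  | Dirac1 =>
      @Complex R (expR (- complex.Re w) * cos (complex.Im w)) (- (expR (- complex.Re w) * sin (complex.Im w)))
  end.

Definition Phi (R : realType) (k : delay_kernel R) (tt alpha beta : R)
  (w : R[i]) : R[i] :=
  (w + tt%:C) ^+ 4
  - alpha%:C * tt%:C ^+ 2 * (w + tt%:C) ^+ 2 * Hhat k w ^+ 2
  + beta%:C * tt%:C ^+ 4 * Hhat k w ^+ 4.

Definition region_R (R : realType) (alpha beta : R) : Prop :=
  `|alpha| - 1 < beta /\ beta < 1.

Definition region_S (R : realType) (alpha beta : R) : Prop :=
  alpha < 2 /\ alpha - 1 < beta /\ beta < (alpha - 4) ^+ 2 / 4.

(* Main.v *)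
Require Import Defs.
From HB Require Import structures.
From mathcomp Require Import all_boot all_order all_algebra.
From mathcomp Require Import all_classical all_reals all_analysis.
From mathcomp Require Import complex.
From mathcomp Require Import measurable_realfun.
From mathcomp Require Import lra ring.
Import Order.TTheory GRing.Theory Num.Theory.
Local Open Scope ring_scope.
Section S.
Local Open Scope classical_set_scope.
Variable R : realType.
Notation mu := (@lebesgue_measure R).
Notation D := (`[0%R, +oo[ : set R).

Lemma mD : measurable D. Proof. exact: measurable_itv. Qed.

Lemma meas_lin (h : R -> R) (c : R) : measurable_fun setT h ->
  measurable_fun D (fun s => h (c * s)).
Proof.
move=> mh; apply: measurable_funTS.
apply: (measurableT_comp (f := h) (g := fun s => c * s)) => //.
exact: measurable_funM.
Qed.

Lemma g_int (g : R -> R) : density_mean1 g -> mu.-integrable D (EFin \o g).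
Proof.
move=> [mg [g0 [i1 _]]]; apply/integrableP; split.
  exact/measurable_EFinP.
rewrite (_ : (\int[mu]_(x in D) `|(EFin \o g) x|)%E = (\int[mu]_(x in D) (g x)%:E)%E).
  by rewrite i1 ltry.
apply: eq_integral => x; rewrite inE /= in_itv /= andbT => x0.
by rewrite /= ger0_norm // g0.
Qed.

Lemma dom_int (g h : R -> R) : density_mean1 g -> measurable_fun D h ->
  (forall s, D s -> `|h s| <= 1) ->
  mu.-integrable D (EFin \o (fun s => g s * h s)).
Proof.
move=> dg mh hb; have [mg [g0 _]] := dg.
have gi := g_int g dg. apply: (le_integrable _ _ _ gi) => //.
  apply/measurable_EFinP; exact: measurable_funM.
move=> x Dx /=; rewrite lee_fin normrM.
have gx : 0 <= g x by apply: g0; move: Dx; rewrite /= in_itv /= andbT.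
rewrite (ger0_norm gx) ler_piMr //; exact: hb.
Qed.

Lemma Zint (f : R -> R) (r : R) : mu.-integrable D (EFin \o f) ->
  mu.-integrable D (EFin \o (fun x => r * f x)).
Proof.
move=> fi; have -> : EFin \o (fun x => r * f x) = (fun x => r%:E * (EFin \o f) x)%E.
  by apply: funext => x /=; rewrite EFinM.
exact: integrableZl.
Qed.

Lemma Dint (f h : R -> R) : mu.-integrable D (EFin \o f) ->
  mu.-integrable D (EFin \o h) ->
  mu.-integrable D (EFin \o (fun x => f x + h x)).
Proof.
move=> fi hi; have -> : EFin \o (fun x => f x + h x) = ((EFin \o f) \+ (EFin \o h))%E.
  by apply: funext => x /=; rewrite EFinD.
exact: integrableD.
Qed.

Lemma dens_bound (g : R -> R) (a b : R) : density_mean1 g -> 0 <= a ->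
  Rintegral mu D (fun s => g s * expR (- (a * s)) * cos (b * s)) ^+ 2 +
  Rintegral mu D (fun s => g s * expR (- (a * s)) * sin (b * s)) ^+ 2 <= 1.
Proof.
move=> dg a0.
set C := Rintegral mu D (fun s => g s * expR (- (a * s)) * cos (b * s)).
set S := Rintegral mu D (fun s => g s * expR (- (a * s)) * sin (b * s)).
have [mg [g0 [i1 _]]] := dg.
have Ds s : D s -> 0 <= s by rewrite /= in_itv /= andbT.
have me : measurable_fun D (fun s => expR (- (a * s))).
  apply: (@meas_lin (fun s => expR (- s)) a).
  have := @measurableT_comp _ _ _ _ _ _ expR setT (fun s : R => - s). move=> H. apply: H => //. exact: measurable_funN.
have mc : measurable_fun D (fun s => cos (b * s)).
  by apply: meas_lin; apply: continuous_measurable_fun; exact: continuous_cos.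
have ms : measurable_fun D (fun s => sin (b * s)).
  by apply: meas_lin; apply: continuous_measurable_fun; exact: continuous_sin.
have eb s : D s -> `|expR (- (a * s))| <= 1.
  move=> /Ds s0; rewrite ger0_norm ?expR_ge0 // expR_le1 oppr_le0.
  exact: mulr_ge0.
have fA (t : R -> R) : (fun s => g s * expR (- (a * s)) * t s) = (fun s => g s * (expR (- (a * s)) * t s)).
  by apply: funext => s; rewrite mulrA.
have ic : mu.-integrable D (EFin \o (fun s => g s * expR (- (a * s)) * cos (b * s))).
  rewrite fA; apply: dom_int => //; first exact: measurable_funM.
  by move=> s Ds'; rewrite normrM -[1]mulr1 ler_pM // ?eb // cos_max.
have is' : mu.-integrable D (EFin \o (fun s => g s * expR (- (a * s)) * sin (b * s))).
  rewrite fA; apply: dom_int => //; first exact: measurable_funM.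
  by move=> s Ds'; rewrite normrM -[1]mulr1 ler_pM // ?eb // sin_max.
have i0 : mu.-integrable D (EFin \o (fun s => g s * expR (- (a * s)))).
  by apply: dom_int.
have ig := g_int g dg.
set N := Num.sqrt (C ^+ 2 + S ^+ 2).
have N0 : 0 <= N := sqrtr_ge0 _.
have NN : N ^+ 2 = C ^+ 2 + S ^+ 2 by rewrite sqr_sqrtr // addr_ge0 // sqr_ge0.
have Ig : Rintegral mu D g = 1 by rewrite /Rintegral i1.
have I0 : Rintegral mu D (fun s => g s * expR (- (a * s))) <= 1.
  rewrite -Ig; apply: le_Rintegral; [exact: measurable_itv|exact: i0|exact: ig|].
  move=> s Ds'; have := g0 s (Ds s Ds'); have := eb s Ds'.
  rewrite ger0_norm ?expR_ge0 // => e1 gs.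
  by rewrite -[X in _ <= X]mulr1 ler_pM // expR_ge0.
have key : N ^+ 2 <= N.
  rewrite NN expr2 [S ^+ 2]expr2.
  rewrite {1}/C {1}/S -!RintegralZl //; try exact: measurable_itv.
  rewrite -RintegralD //; try exact: measurable_itv; try exact: Zint.
  apply: (le_trans (y := Rintegral mu D (fun s => N * (g s * expR (- (a * s)))))).
    apply: le_Rintegral; try exact: measurable_itv; try exact: Zint.
      by apply: Dint; exact: Zint.
    move=> s Ds'; have gs := g0 s (Ds s Ds'); have es := expR_ge0 (- (a * s)).
    have ge : 0 <= g s * expR (- (a * s)) by apply: mulr_ge0.
    have cs := cos2Dsin2 (b * s).
    have hb : C * cos (b * s) + S * sin (b * s) <= N.
      apply: (le_trans (ler_norm _)).
      rewrite -sqrtr_sqr ler_sqrt; last by rewrite addr_ge0 // sqr_ge0.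
      rewrite -[X in _ <= X]mulr1 -cs -subr_ge0.
      set c := cos (b * s); set sn := sin (b * s).
      have -> : (C ^+ 2 + S ^+ 2) * (c ^+ 2 + sn ^+ 2) - (C * c + S * sn) ^+ 2 = (C * sn - S * c) ^+ 2 by ring.
      exact: sqr_ge0.
    have := ler_wpM2l ge hb.
    have -> : C * (g s * expR (- (a * s)) * cos (b * s)) + S * (g s * expR (- (a * s)) * sin (b * s))
       = g s * expR (- (a * s)) * (C * cos (b * s) + S * sin (b * s)) by ring.
    by rewrite [N * _]mulrC.
  rewrite RintegralZl //; try exact: measurable_itv.
  by rewrite -[X in _ <= X]mulr1 ler_wpM2l.
have N1 : N <= 1.
  by move: key; rewrite expr2 => key; nra.
by rewrite -NN; nra.
Qed.
End S.

Section T.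
Local Open Scope complex_scope.
Lemma real_quad (R : realType) (x y al be : R) :
  x ^+ 2 - y ^+ 2 - al * x + be = 0 -> y * (2 * x - al) = 0 ->
  1 <= x ^+ 2 + y ^+ 2 -> `|al| - 1 < be -> be < 1 -> False.
Proof.
move=> e1 e2 n1 h1 h2.
have ha : al <= `|al| /\ - al <= `|al| by split; [exact: ler_norm | rewrite -normrN; exact: ler_norm].
case: ha => ha1 ha2.
move/eqP: e2; rewrite mulf_eq0 => /orP[/eqP y0|/eqP ex].
  subst y. have xx : 1 <= x ^+ 2 by lra.
  have : 1 <= x \/ x <= -1.
    case: (lerP 1 x) => hx; [by left| right].
    case: (lerP x (-1)) => hx' //. exfalso.
    have : x ^+ 2 < 1 by rewrite expr2; nra.
    lra.
  case=> hx.
    have : 0 <= (x - 1) * (x - be) by apply: mulr_ge0; lra.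
    nra.
  have : 0 <= (- x - 1) * (- x - be) by apply: mulr_ge0; lra.
  nra.
have ea : al = 2 * x by lra. subst al.
move: e1 n1; rewrite !expr2 => e1 n1.
nra.
Qed.

Definition n2 (R : realType) (z : R[i]) : R := complex.Re z ^+ 2 + complex.Im z ^+ 2.

Arguments n2 {R}.
Lemma n2M (R : realType) (z1 z2 : R[i]) : n2 (z1 * z2) = n2 z1 * n2 z2.
Proof. case: z1 => a b; case: z2 => c d; rewrite /n2 /=. ring. Qed.

Lemma n2_ge0 (R : realType) (z : R[i]) : 0 <= n2 z.
Proof. by rewrite /n2 addr_ge0 // sqr_ge0. Qed.

Lemma n2_eq0 (R : realType) (z : R[i]) : n2 z = 0 -> z = 0.
Proof.
case: z => a b; rewrite /n2 /= => h.
have a0 : a = 0 by apply/eqP; rewrite -sqrf_eq0; apply/eqP; have := sqr_ge0 a; have := sqr_ge0 b; lra.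
have b0 : b = 0 by apply/eqP; rewrite -sqrf_eq0; apply/eqP; have := sqr_ge0 a; have := sqr_ge0 b; lra.
by rewrite a0 b0.
Qed.

Arguments n2_ge0 {R}.
Arguments n2_eq0 {R}.
Lemma alg_main (R : realType) (tt al be : R) (w H : R[i]) :
  0 < tt -> `|al| - 1 < be -> be < 1 -> 0 <= complex.Re w -> n2 H <= 1 ->
  (w + tt%:C) ^+ 4 - al%:C * tt%:C ^+ 2 * (w + tt%:C) ^+ 2 * H ^+ 2
  + be%:C * tt%:C ^+ 4 * H ^+ 4 = 0 -> False.
Proof.
move=> tt0 h1 h2 rw nH e.
set X := w + tt%:C.
set Y := tt%:C * H.
have nX : tt ^+ 2 <= n2 X.
  rewrite /X; case: w rw {e X Y} => a b /= rw; rewrite /n2 /=.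
  have := sqr_ge0 b; rewrite !expr2; nra.
have nY : n2 Y <= tt ^+ 2.
  rewrite /Y n2M; have -> : n2 tt%:C = tt ^+ 2 by rewrite /n2 /= expr0n addr0.
  have := n2_ge0 H; rewrite !expr2; nra.
set A := X ^+ 2. set B := Y ^+ 2.
have eq : A ^+ 2 - al%:C * A * B + be%:C * B ^+ 2 = 0.
  apply: etrans e; rewrite /A /B /Y /X; ring.
have nA : n2 A = n2 X ^+ 2 by rewrite /A !expr2 n2M.
have nB : n2 B = n2 Y ^+ 2 by rewrite /B !expr2 n2M.
have tt2 : 0 < tt ^+ 2 by rewrite exprn_gt0.
case: (eqVneq B 0) => B0.
  have : A ^+ 2 = 0 by rewrite -eq B0; ring.
  move=> /eqP; rewrite expf_eq0 /= => /eqP A0.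
  have h0 : n2 (0 : R[i]) = 0 by rewrite /n2 /= expr0n /= addr0.
  move: nA; rewrite A0 h0 => h.
  have : 0 < n2 X ^+ 2 by rewrite exprn_gt0 // (lt_le_trans tt2 nX).
  by rewrite -h ltxx.
set q := A / B.
have Aq : A = q * B by rewrite /q divfK.
have nq : 1 <= n2 q.
  have nB0 : 0 < n2 B.
    rewrite lt_def n2_ge0 andbT; apply/eqP => h; move: B0; rewrite (n2_eq0 _ h) eqxx //.
  have : n2 B <= n2 A.
    rewrite nA nB; have := n2_ge0 Y; rewrite !expr2; nra.
  rewrite Aq n2M => h; have := n2_ge0 q; nra.
have eq2 : q ^+ 2 - al%:C * q + be%:C = 0.
  have : (q ^+ 2 - al%:C * q + be%:C) * B ^+ 2 = 0 by rewrite -eq Aq; ring.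
  by move/eqP; rewrite mulf_eq0 expf_eq0 (negbTE B0) andbF orbF => /eqP.
move: eq2 nq; clear Aq; clearbody q; case: q => x y eq2.
have e1 := congr1 (@complex.Re R) eq2.
have e2 := congr1 (@complex.Im R) eq2.
move: e1 e2; rewrite /= /n2 /= => e1 e2 nq.
apply: (@real_quad R x y al be) => //.
  by rewrite -e1; ring.
by rewrite -e2; ring.
Qed.

Lemma Hhat_bound (R : realType) (k : delay_kernel R) (w : R[i]) :
  admissible k -> 0 <= complex.Re w -> n2 (Hhat k w) <= 1.
Proof.
case: k => [g|] /= adm rw; rewrite /n2 /=.
  by rewrite sqrrN; exact: dens_bound.
rewrite sqrrN !exprMn -mulrDr cos2Dsin2 mulr1.
have e1 : expR (- complex.Re w) <= 1 by rewrite expR_le1 oppr_le0.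
have e0 := expR_ge0 (- complex.Re w).
rewrite expr2; nra.
Qed.
End T.

Theorem theorem5 (R : realType) :
  (forall (k : delay_kernel R) (tt alpha beta : R),
      admissible k -> 0 < tt -> region_R alpha beta ->
      forall w : R[i], Phi k tt alpha beta w = 0 -> complex.Re w < 0) /\
  (forall alpha beta : R, region_R alpha beta -> region_S alpha beta).
Proof.
split.
  move=> k tt al be adm tt0 [h1 h2] w e.
  case: (ltP (complex.Re w) 0) => // rw; exfalso.
  exact: (@alg_main R tt al be w (Hhat k w) tt0 h1 h2 rw (@Hhat_bound R k w adm rw) e).
move=> al be [h1 h2].
have ha := ler_norm al.
have a2 : al < 2 by lra.
split => //; split; first by lra.
rewrite ltr_pdivlMr // expr2; nra.
Qed.
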